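(* Let $F_0$ and $F_s$ be distribution functions, with $U_r(t):=F_r^{\leftarrow}(1-1/t)$ for $t>1$, $r\in\{0,s\}$, and let $\gamma\in\mathbb{R}$, $\rho\le0$, $c\in\mathbb{R}$, $s\in\mathbb{R}$. Let $a_0$ be a positive function and $\alpha_0$ a function, eventually of constant sign, with $\lim_{t\to\infty}\alpha_0(t)=0$, such that for each $x>0$ $$\lim_{t\to\infty}\frac{\frac{U_0(tx)-U_0(t)}{a_0(t)}-\frac{x^\gamma-1}{\gamma}}{\alpha_0(t)}=H_{\gamma,\rho}(x)$$ and $$\lim_{t\to\infty}\frac{\frac{U_s(t)-U_0(t)}{a_0(t)}-\frac{e^{c\gamma s}-1}{\gamma}}{\alpha_0(t)}=H_{\gamma,\rho}(e^{cs}).$$ Define $\alpha_s(t):=e^{cs\rho}\alpha_0(t)$ and $a_s(t):=e^{cs\gamma}a_0(t)\bigl(1+\alpha_0(t)\frac{e^{cs\rho}-1}{\rho}\bigr)$. Then for every $x>0$ $$\lim_{t\to\infty}\frac{\frac{U_s(tx)-U_s(t)}{a_s(t)}-\frac{x^\gamma-1}{\gamma}}{\alpha_s(t)}=H_{\gamma,\rho}(x).$$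
   Context: $F^{\leftarrow}$ denotes the generalized inverse. $H_{\gamma,\rho}(x):=\frac1\rho\Bigl(\frac{x^{\gamma+\rho}-1}{\gamma+\rho}-\frac{x^\gamma-1}{\gamma}\Bigr)$ for $x>0$, defined by continuity when $\gamma=0$, $\rho=0$ or $\gamma+\rho=0$. Likewise $\frac{x^\gamma-1}{\gamma}:=\log x$ and $\frac{e^{c\gamma s}-1}{\gamma}:=cs$ when $\gamma=0$, and $\frac{e^{cs\rho}-1}{\rho}:=cs$ when $\rho=0$. *)

(* Defs.v *)
From Stdlib Require Import Reals.
From Coquelicot Require Import Coquelicot.
Open Scope R_scope.

Definition is_distribution_function (F : R -> R) : Prop :=
  (forall x y, x <= y -> F x <= F y) /\
  (forall x, filterlim F (at_right x) (locally (F x))) /\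
  is_lim F m_infty 0 /\ is_lim F p_infty 1.

Definition gen_inv (F : R -> R) (p : R) : Rbar :=
  Glb_Rbar (fun x => p <= F x).

(* U(t) = F^{<-}(1 - 1/t); finite for t > 1 when F is a distribution function *)
Definition Uq (F : R -> R) (t : R) : R := real (gen_inv F (1 - / t)).

Definition hfun (g x : R) : R :=
  if Req_EM_T g 0 then ln x else (Rpower x g - 1) / g.

Definition eq_fun (g y : R) : R :=
  if Req_EM_T g 0 then y else (exp (g * y) - 1) / g.

(* H_{g,r}(x) = (1/r) ( (x^{g+r}-1)/(g+r) - (x^g-1)/g ), extended by continuity:
   the cases g = 0 and g + r = 0 are handled inside hfun; the case r = 0 is the
   limit r -> 0, i.e. the derivative of a |-> (x^a-1)/a at a = g. *)
Definition Hfun (g r x : R) : R :=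
  if Req_EM_T r 0 then
    (if Req_EM_T g 0 then (ln x) ^ 2 / 2
     else / g * (Rpower x g * ln x - (Rpower x g - 1) / g))
  else / r * (hfun (g + r) x - hfun g x).

(* Main.v *)
Require Import Defs.
From Stdlib Require Import Reals Lra.
From Coquelicot Require Import Coquelicot.
Open Scope R_scope.

Section L.
Context {T : Type} {F : (T -> Prop) -> Prop} {FF : Filter F}.
Lemma lim_plus (f g : T -> R) (a b : R) : filterlim f F (locally a) -> filterlim g F (locally b) ->
  filterlim (fun t => f t + g t) F (locally (a + b)).
Proof. intros. eapply filterlim_comp_2; eauto. exact (@filterlim_plus R_AbsRing R_NormedModule a b). Qed.
Lemma lim_mult (f g : T -> R) (a b : R) : filterlim f F (locally a) -> filterlim g F (locally b) ->
  filterlim (fun t => f t * g t) F (locally (a * b)).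
Proof. intros. eapply filterlim_comp_2; eauto. exact (@filterlim_mult R_AbsRing a b). Qed.
Lemma lim_opp (f : T -> R) (a : R) : filterlim f F (locally a) -> filterlim (fun t => - f t) F (locally (- a)).
Proof. intros. eapply filterlim_comp; eauto. exact (@filterlim_opp R_AbsRing R_NormedModule a). Qed.
Lemma lim_minus (f g : T -> R) (a b : R) : filterlim f F (locally a) -> filterlim g F (locally b) ->
  filterlim (fun t => f t - g t) F (locally (a - b)).
Proof. intros. unfold Rminus. apply lim_plus; auto. apply lim_opp; auto. Qed.
Lemma lim_inv (f : T -> R) (a : R) : filterlim f F (locally a) -> a <> 0 -> filterlim (fun t => / f t) F (locally (/ a)).
Proof. intros. eapply filterlim_comp; eauto. apply (filterlim_Rbar_inv (Finite a)).
  intro E; injection E; auto. Qed.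
Lemma lim_div (f g : T -> R) (a b : R) : filterlim f F (locally a) -> filterlim g F (locally b) -> b <> 0 ->
  filterlim (fun t => f t / g t) F (locally (a / b)).
Proof. intros. unfold Rdiv. apply lim_mult; auto. apply lim_inv; auto. Qed.
Lemma lim_const (a : R) : filterlim (fun _ : T => a) F (locally a).
Proof. apply filterlim_const. Qed.
Lemma lim_eq (f : T -> R) (a b : R) : filterlim f F (locally a) -> a = b -> filterlim f F (locally b).
Proof. intros H E; subst; auto. Qed.
Lemma ev_neq (f : T -> R) (l : R) : filterlim f F (locally l) -> l <> 0 -> F (fun t => f t <> 0).
Proof. intros Hf Hl. assert (Hp: 0 < Rabs l) by (apply Rabs_pos_lt; auto).
  apply filterlim_locally with (eps := mkposreal _ Hp) in Hf.
  apply filter_imp with (2 := Hf). intros t Hb Ht. rewrite Ht in Hb.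
  unfold ball in Hb; simpl in Hb; unfold AbsRing_ball, abs, minus, plus, opp in Hb; simpl in Hb.
  rewrite Rplus_0_l, Rabs_Ropp in Hb; lra. Qed.
End L.

Ltac lim_tac :=
  match goal with
  | |- filterlim (fun _ => ?c) _ (locally _) => apply lim_const
  | |- filterlim (fun t => @?f t + @?g t) _ (locally _) => eapply (lim_plus f g); lim_tac
  | |- filterlim (fun t => @?f t - @?g t) _ (locally _) => eapply (lim_minus f g); lim_tac
  | |- filterlim (fun t => @?f t * @?g t) _ (locally _) => eapply (lim_mult f g); lim_tac
  | |- filterlim (fun t => @?f t / @?g t) _ (locally _) => eapply (lim_div f g); lim_tac
  | |- filterlim _ _ (locally _) => eassumption
  | _ => idtac
  end.

Lemma lim_mulx x : 0 < x -> filterlim (fun t => t * x) (Rbar_locally p_infty) (Rbar_locally p_infty).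
Proof. intros Hx P [M HM]. exists (M / x). intros t Ht. apply HM.
  apply Rmult_lt_compat_r with (r := x) in Ht; auto.
  replace (M / x * x) with M in Ht by (field; lra). auto. Qed.

Lemma hfun_0 x : hfun 0 x = ln x.
Proof. unfold hfun. destruct (Req_EM_T 0 0); [auto | lra]. Qed.
Lemma hfun_n g x : g <> 0 -> hfun g x = (Rpower x g - 1) / g.
Proof. intros. unfold hfun. destruct (Req_EM_T g 0); [lra | auto]. Qed.
Lemma Hfun_00 x : Hfun 0 0 x = ln x ^ 2 / 2.
Proof. unfold Hfun. destruct (Req_EM_T 0 0); [auto | lra]. Qed.
Lemma Hfun_g0 g x : g <> 0 -> Hfun g 0 x = / g * (Rpower x g * ln x - (Rpower x g - 1) / g).
Proof. intros. unfold Hfun. destruct (Req_EM_T 0 0); [|lra]. destruct (Req_EM_T g 0); [lra|auto]. Qed.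
Lemma Hfun_r g r x : r <> 0 -> Hfun g r x = / r * (hfun (g + r) x - hfun g x).
Proof. intros. unfold Hfun. destruct (Req_EM_T r 0); [lra|auto]. Qed.

Lemma hfun_mult g x y : 0 < x -> 0 < y -> hfun g (x * y) = hfun g x + Rpower x g * hfun g y.
Proof. intros. destruct (Req_EM_T g 0) as [->|Hg].
  - rewrite !hfun_0, ln_mult, Rpower_O; auto; ring.
  - rewrite !hfun_n; auto. rewrite <- Rpower_mult_distr; auto. field; auto. Qed.

Lemma Hfun_mult g r x y : 0 < x -> 0 < y ->
  Hfun g r (x * y) = Hfun g r x + Rpower x g * hfun r x * hfun g y + Rpower x (g + r) * Hfun g r y.
Proof. intros. destruct (Req_EM_T r 0) as [->|Hr].
  - rewrite Rplus_0_r, hfun_0. destruct (Req_EM_T g 0) as [->|Hg].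
    + rewrite !Hfun_00, hfun_0, ln_mult, Rpower_O; auto. field.
    + rewrite !Hfun_g0, hfun_n, ln_mult, <- Rpower_mult_distr; auto. field; auto.
  - rewrite !Hfun_r; auto. rewrite !hfun_mult; auto. rewrite (hfun_n r), Rpower_plus; auto.
    field; auto. Qed.

Lemma hfun_e a : hfun a (exp 1) <> 0.
Proof. destruct (Req_EM_T a 0) as [->|Ha].
  - rewrite hfun_0, ln_exp. lra.
  - rewrite hfun_n; auto. unfold Rpower. rewrite ln_exp, Rmult_1_r.
    intro E. assert (exp a = exp 0).
    { rewrite exp_0. apply Rmult_eq_compat_r with (r := a) in E. field_simplify in E; auto. lra. }
    apply exp_inv in H. auto. Qed.

Lemma Delta_ne g r : hfun g (exp 1) * Hfun g r (exp 2) - hfun g (exp 2) * Hfun g r (exp 1) <> 0.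
Proof.
  assert (E2 : exp 2 = exp 1 * exp 1) by (rewrite <- exp_plus; f_equal; ring).
  rewrite E2, Hfun_mult, hfun_mult; try apply exp_pos.
  assert (Hq : Rpower (exp 1) g = exp g) by (unfold Rpower; rewrite ln_exp; f_equal; ring).
  rewrite Rpower_plus, Hq.
  assert (Hr : Rpower (exp 1) r = exp r) by (unfold Rpower; rewrite ln_exp; f_equal; ring).
  rewrite Hr. pose proof (hfun_e g). pose proof (exp_pos g).
  destruct (Req_EM_T r 0) as [->|Hr0].
  - rewrite hfun_0, ln_exp, exp_0.
    replace (hfun g (exp 1) * (Hfun g 0 (exp 1) + exp g * 1 * hfun g (exp 1) + exp g * 1 * Hfun g 0 (exp 1)) -
      (hfun g (exp 1) + exp g * hfun g (exp 1)) * Hfun g 0 (exp 1)) with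
      (exp g * (hfun g (exp 1) * hfun g (exp 1))) by ring.
    apply Rmult_integral_contrapositive; split; [lra|]. apply Rmult_integral_contrapositive; auto.
  - rewrite !(Hfun_r g r (exp 1)); auto. pose proof (hfun_e (g + r)). pose proof (hfun_e r).
    rewrite (hfun_n r) in *; auto. rewrite Hr in *.
    replace (hfun g (exp 1) * (/ r * (hfun (g + r) (exp 1) - hfun g (exp 1)) + exp g * ((exp r - 1) / r) * hfun g (exp 1) +
      exp g * exp r * (/ r * (hfun (g + r) (exp 1) - hfun g (exp 1)))) -
      (hfun g (exp 1) + exp g * hfun g (exp 1)) * (/ r * (hfun (g + r) (exp 1) - hfun g (exp 1)))) with
      (exp g * hfun g (exp 1) * ((exp r - 1) / r) * hfun (g + r) (exp 1)) by (field; auto).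
    repeat (apply Rmult_integral_contrapositive; split); auto; try lra. - intro E; apply H2; rewrite E; unfold Rdiv; ring.
    - apply Rinv_neq_0_compat; auto.
Qed.

Lemma eq_fun_h g y : eq_fun g y = hfun g (exp y).
Proof. unfold eq_fun, hfun. destruct (Req_EM_T g 0). rewrite ln_exp; auto.
  unfold Rpower. rewrite ln_exp. auto. Qed.
Lemma Rpower_exp y g : Rpower (exp y) g = exp (y * g).
Proof. unfold Rpower. rewrite ln_exp. f_equal; ring. Qed.

Theorem lemma1 (F0 Fs : R -> R) (gamma rho c s : R) (a0 alpha0 : R -> R) :
  is_distribution_function F0 ->
  is_distribution_function Fs ->
  rho <= 0 ->
  (forall t, 1 < t -> 0 < a0 t) ->
  (exists T, (forall t, T < t -> 0 < alpha0 t) \/ (forall t, T < t -> alpha0 t < 0)) ->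
  is_lim alpha0 p_infty 0 ->
  (forall x, 0 < x ->
     is_lim (fun t => ((Uq F0 (t * x) - Uq F0 t) / a0 t - hfun gamma x) / alpha0 t)
            p_infty (Hfun gamma rho x)) ->
  is_lim (fun t => ((Uq Fs t - Uq F0 t) / a0 t - eq_fun gamma (c * s)) / alpha0 t)
         p_infty (Hfun gamma rho (exp (c * s))) ->
  let alphas := fun t => exp (c * s * rho) * alpha0 t in
  let as_ := fun t => exp (c * s * gamma) * a0 t * (1 + alpha0 t * eq_fun rho (c * s)) in
  forall x, 0 < x ->
    is_lim (fun t => ((Uq Fs (t * x) - Uq Fs t) / as_ t - hfun gamma x) / alphas t)
           p_infty (Hfun gamma rho x).
Proof.
intros _ _ Hrho Ha0 Hsign Halpha HL HM alphas as_ x Hx.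
pose (eps := fun z t => ((Uq F0 (t*z) - Uq F0 t)/a0 t - hfun gamma z)/alpha0 t - Hfun gamma rho z).
pose (del := fun t => ((Uq Fs t - Uq F0 t)/a0 t - eq_fun gamma (c*s))/alpha0 t - Hfun gamma rho (exp (c*s))).
assert (Heps : forall z, 0 < z -> filterlim (eps z) (Rbar_locally p_infty) (locally 0)).
{ intros z Hz. eapply lim_eq. unfold eps; cbv beta. apply lim_minus. apply (HL z Hz). apply lim_const. ring. }
assert (Hdel : filterlim del (Rbar_locally p_infty) (locally 0)).
{ eapply lim_eq. unfold del; cbv beta. apply lim_minus. apply HM. apply lim_const. ring. }
assert (HA : filterlim alpha0 (Rbar_locally p_infty) (locally 0)) by exact Halpha.
set (y1 := exp 1). set (y2 := exp 2).
assert (Hy1 : 0 < y1) by apply exp_pos. assert (Hy2 : 0 < y2) by apply exp_pos.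
assert (He1 := Heps _ (Rmult_lt_0_compat _ _ Hx Hy1)).
assert (He2 := Heps _ (Rmult_lt_0_compat _ _ Hx Hy2)).
assert (Hex := Heps _ Hx).
assert (Hey1 := lim_mulx x Hx). assert (Hey1' : filterlim (fun t => eps y1 (t*x)) (Rbar_locally p_infty) (locally 0)).
{ eapply filterlim_comp; [apply Hey1 | apply Heps; auto]. }
assert (Hey2' : filterlim (fun t => eps y2 (t*x)) (Rbar_locally p_infty) (locally 0)).
{ eapply filterlim_comp; [apply Hey1 | apply Heps; auto]. }
assert (Hdel' : filterlim (fun t => del (t*x)) (Rbar_locally p_infty) (locally 0)).
{ eapply filterlim_comp; [apply Hey1 | auto]. }
clear Hey1.
set (h1 := hfun gamma y1). set (h2 := hfun gamma y2).
set (H1 := Hfun gamma rho y1). set (H2 := Hfun gamma rho y2).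
set (K1 := Hfun gamma rho (x*y1) - Hfun gamma rho x).
set (K2 := Hfun gamma rho (x*y2) - Hfun gamma rho x).
pose (c1 := fun t => K1 + eps (x*y1) t - eps x t).
pose (c2 := fun t => K2 + eps (x*y2) t - eps x t).
pose (P1 := fun t => H1 + eps y1 (t*x)).
pose (P2 := fun t => H2 + eps y2 (t*x)).
pose (D := fun t => h1 * P2 t - h2 * P1 t).
pose (R1 := fun t => (c1 t * P2 t - c2 t * P1 t) / D t).
pose (R2 := fun t => (h1 * c2 t - h2 * c1 t) / D t).
assert (HDelta : h1 * H2 - h2 * H1 <> 0) by apply Delta_ne.
assert (HD : filterlim D (Rbar_locally p_infty) (locally (h1 * H2 - h2 * H1))).
{ eapply lim_eq. unfold D, P1, P2. lim_tac. ring. }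
set (X := Rpower x gamma). set (hrx := hfun rho x). set (XY := Rpower x (gamma + rho)).
assert (EK1 : K1 = X * hrx * h1 + XY * H1) by (unfold K1; rewrite Hfun_mult; auto; unfold X, hrx, h1, XY, H1; ring).
assert (EK2 : K2 = X * hrx * h2 + XY * H2) by (unfold K2; rewrite Hfun_mult; auto; unfold X, hrx, h2, XY, H2; ring).
assert (HR1 : filterlim R1 (Rbar_locally p_infty) (locally (X * hrx))).
{ eapply lim_eq. unfold R1, c1, c2, P1, P2. eapply lim_div. lim_tac. exact HD. exact HDelta.
  rewrite EK1, EK2. field. exact HDelta. }
assert (HR2 : filterlim R2 (Rbar_locally p_infty) (locally XY)).
{ eapply lim_eq. unfold R2, c1, c2. eapply lim_div. lim_tac. exact HD. exact HDelta.
  rewrite EK1, EK2. field. exact HDelta. }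
set (e := eq_fun gamma (c*s)). set (G := Hfun gamma rho (exp (c*s))).
set (E := exp (c*s*gamma)). set (E' := exp (c*s*rho)). set (f := eq_fun rho (c*s)).
set (hx := hfun gamma x). set (Hfx := Hfun gamma rho x).
assert (HE : 0 < E) by apply exp_pos. assert (HE' : 0 < E') by apply exp_pos.
pose (W := fun t => R1 t * e + R2 t * (G + del (t*x)) + Hfx + eps x t - G - del t).
pose (Phi := fun t => (W t - E*f*hx)/(E*E'*(1 + alpha0 t * f))).
assert (Hsym : Hfx + X*hrx*e + XY*G = G + E*f*hx + E*E'*Hfx).
{ assert (Hz : 0 < exp (c*s)) by apply exp_pos.
  pose proof (Hfun_mult gamma rho x (exp (c*s)) Hx Hz) as A1.
  pose proof (Hfun_mult gamma rho (exp (c*s)) x Hz Hx) as A2.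
  rewrite Rmult_comm in A2. rewrite A2 in A1.
  rewrite !Rpower_exp, <- !eq_fun_h, Rmult_plus_distr_l, exp_plus in A1.
  fold e f E E' G hx Hfx X hrx XY in A1. lra. }
assert (HPhi : filterlim Phi (Rbar_locally p_infty) (locally Hfx)).
{ eapply lim_eq. unfold Phi, W. lim_tac.
  - rewrite Rmult_0_l, Rplus_0_r, Rmult_1_r. apply Rmult_integral_contrapositive; split; lra.
  - assert (Hnz : E * E' * (1 + 0 * f) <> 0).
    { rewrite Rmult_0_l, Rplus_0_r, Rmult_1_r. apply Rmult_integral_contrapositive; split; lra. }
    apply (Rmult_eq_reg_r (E * E' * (1 + 0 * f))); [|exact Hnz]. unfold Rdiv. rewrite Rmult_assoc, Rinv_l; auto. lra. }
assert (L3 : E * hx = e * X - e + hx).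
{ assert (Hz : 0 < exp (c*s)) by apply exp_pos.
  pose proof (hfun_mult gamma x (exp (c*s)) Hx Hz) as A1.
  pose proof (hfun_mult gamma (exp (c*s)) x Hz Hx) as A2.
  rewrite Rmult_comm in A2. rewrite A2 in A1.
  rewrite !Rpower_exp, <- !eq_fun_h in A1. fold e E hx X in A1. lra. }
assert (EU : forall z t', a0 t' <> 0 -> alpha0 t' <> 0 -> Uq F0 (t' * z) - Uq F0 t' =
   a0 t' * (hfun gamma z + alpha0 t' * (Hfun gamma rho z + eps z t'))).
{ intros z t' H0 H0'. unfold eps. field. auto. }
assert (EM : forall t', a0 t' <> 0 -> alpha0 t' <> 0 -> Uq Fs t' - Uq F0 t' =
   a0 t' * (e + alpha0 t' * (G + del t'))).
{ intros t' H0 H0'. unfold del. fold e G. field. auto. }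
assert (Ev1 : Rbar_locally p_infty (fun t => 1 < t)) by (exists 1; auto).
assert (Ev2 : Rbar_locally p_infty (fun t => 1 < t * x)) by exact (lim_mulx x Hx _ Ev1).
assert (EvA : Rbar_locally p_infty (fun t => alpha0 t <> 0)).
{ destruct Hsign as [T [HT|HT]]; exists T; intros t Ht; specialize (HT t Ht); lra. }
assert (EvB : Rbar_locally p_infty (fun t => alpha0 (t * x) <> 0)) by exact (lim_mulx x Hx _ EvA).
assert (EvD : Rbar_locally p_infty (fun t => D t <> 0)) by exact (ev_neq D _ HD HDelta).
assert (Evf : Rbar_locally p_infty (fun t => 1 + alpha0 t * f <> 0)).
{ apply (ev_neq _ (1 + 0 * f)). lim_tac. rewrite Rmult_0_l, Rplus_0_r. lra. }
apply (is_lim_ext_loc Phi); [| exact HPhi].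
destruct (filter_and _ _ Ev1 (filter_and _ _ Ev2 (filter_and _ _ EvA (filter_and _ _ EvB
  (filter_and _ _ EvD Evf))))) as [M HMv].
exists M. intros t Ht. destruct (HMv t Ht) as (Ht1 & Ht2 & HAt & HBt & HDt & Hft).
assert (Hat : 0 < a0 t) by auto. assert (Hat' : 0 < a0 (t * x)) by auto.
assert (Hxy1 : 0 < x * y1) by (apply Rmult_lt_0_compat; auto).
assert (Hxy2 : 0 < x * y2) by (apply Rmult_lt_0_compat; auto).
assert (E1 := EU (x * y1) t ltac:(lra) HAt).
assert (E1' := EU (x * y2) t ltac:(lra) HAt).
assert (E2 := EU x t ltac:(lra) HAt).
assert (E3 := EU y1 (t * x) ltac:(lra) HBt).
assert (E3' := EU y2 (t * x) ltac:(lra) HBt).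
rewrite <- Rmult_assoc in E1, E1'.
rewrite hfun_mult in E1, E1' by auto.
fold hx X h1 h2 H1 H2 Hfx in E1, E1', E2, E3, E3'.
assert (HK1 : Hfun gamma rho (x * y1) = K1 + Hfx) by (unfold K1; fold Hfx; ring).
assert (HK2 : Hfun gamma rho (x * y2) = K2 + Hfx) by (unfold K2; fold Hfx; ring).
rewrite HK1 in E1. rewrite HK2 in E1'.
set (a := a0 t) in *. set (a' := a0 (t * x)) in *. set (A := alpha0 t) in *. set (B := alpha0 (t * x)) in *.
assert (eq1 : h1 * (a' / a - X) + P1 t * (a' / a * B) = A * c1 t).
{ unfold P1, c1. apply (Rmult_eq_reg_l a); [|lra].
  replace (a * (h1 * (a' / a - X) + (H1 + eps y1 (t * x)) * (a' / a * B))) with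
    (a' * (h1 + B * (H1 + eps y1 (t * x))) - a * X * h1) by (field; lra).
  rewrite <- E3. lra. }
assert (eq2 : h2 * (a' / a - X) + P2 t * (a' / a * B) = A * c2 t).
{ unfold P2, c2. apply (Rmult_eq_reg_l a); [|lra].
  replace (a * (h2 * (a' / a - X) + (H2 + eps y2 (t * x)) * (a' / a * B))) with
    (a' * (h2 + B * (H2 + eps y2 (t * x))) - a * X * h2) by (field; lra).
  rewrite <- E3'. lra. }
set (u := a' / a - X) in *. set (v := a' / a * B) in *.
assert (HuD : u * D t = A * (c1 t * P2 t - c2 t * P1 t)).
{ replace (u * D t) with ((h1 * u + P1 t * v) * P2 t - (h2 * u + P2 t * v) * P1 t) by (unfold D; ring).
  rewrite eq1, eq2. ring. }
assert (HvD : v * D t = A * (h1 * c2 t - h2 * c1 t)).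
{ replace (v * D t) with (h1 * (h2 * u + P2 t * v) - h2 * (h1 * u + P1 t * v)) by (unfold D; ring).
  rewrite eq1, eq2. ring. }
assert (Hu : u = A * R1 t).
{ apply (Rmult_eq_reg_r (D t)); auto. rewrite HuD. unfold R1. field. auto. }
assert (Hv : v = A * R2 t).
{ apply (Rmult_eq_reg_r (D t)); auto. rewrite HvD. unfold R2. field. auto. }
assert (Ha' : a' = a * (X + A * R1 t)).
{ rewrite <- Hu. unfold u. field. lra. }
assert (Hab : a' * B = a * A * R2 t).
{ rewrite Rmult_assoc, <- Hv. unfold v. field. lra. }
assert (Hdiff : Uq Fs (t * x) - Uq Fs t = a * (E * hx + A * W t)).
{ replace (Uq Fs (t * x) - Uq Fs t) with
    ((Uq Fs (t * x) - Uq F0 (t * x)) + (Uq F0 (t * x) - Uq F0 t) - (Uq Fs t - Uq F0 t)) by ring.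
  rewrite (EM (t * x) (Rgt_not_eq _ _ Hat') HBt), E2, (EM t (Rgt_not_eq _ _ Hat) HAt). fold a a' A B.
  replace (a' * (e + B * (G + del (t * x)))) with (a' * e + (a' * B) * (G + del (t * x))) by ring.
  rewrite Hab, Ha', L3. unfold W. ring. }
unfold Phi, as_, alphas. fold e f E E' a A. rewrite Hdiff.
field. repeat split; lra.
Qed.
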